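(* Let $p$ be a prime and let $Q\in\mathbb{Q}_p[X_1,\dots,X_n]$ be a nonsingular quadratic form which is anisotropic over $\mathbb{Q}_p$. Then the set $R(Q(\mathbb{Z}^n))$ is dense in $\mathbb{Q}_p$ if and only if $n\geq 3$.
   Context: A quadratic form $Q=\sum_{i,j}a_{ij}X_iX_j$ ($a_{ij}=a_{ji}$, not all zero) is nonsingular if $\det[a_{ij}]\neq 0$; it is anisotropic over $\mathbb{Q}_p$ if $Q(\mathbf{x})\neq 0$ for every nonzero $\mathbf{x}\in\mathbb{Q}_p^n$. For a subset $A$ of a field, $R(A)=\{a/b: a,b\in A,\ b\neq 0\}$. $Q(\mathbb{Z}^n)=\{Q(\mathbf{x}):\mathbf{x}\in\mathbb{Z}^n\}$. Density is with respect to the $p$-adic topology. *)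

(* Defs.v *)
(* Q_p is characterized axiomatically as the completion of Q
   w.r.t. the p-adic valuation (unique up to isometric isomorphism). *)
From HB Require Import structures.
From mathcomp Require Import all_boot all_order all_algebra.
Set Implicit Arguments. Unset Strict Implicit. Unset Printing Implicit Defensive.
Import Order.TTheory GRing.Theory Num.Theory.
Local Open Scope ring_scope.

Definition rat_pval (p : nat) (q : rat) : int :=
  (logn p `|numq q|%N)%:Z - (logn p `|denq q|%N)%:Z.

Definition vclose (K : fieldType) (v : K -> int) (m : int) (x y : K) : Prop :=
  x = y \/ m <= v (x - y).

(* A field K with a discrete valuation v (v 0 is irrelevant) that is
   a completion of Q for the p-adic valuation: this is Q_p up to
   isometric isomorphism. *)
Record padic_field (p : nat) (K : fieldType) := PadicField {
  pval : K -> int;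
  pval_mul : forall x y : K, x != 0 -> y != 0 -> pval (x * y) = pval x + pval y;
  pval_add : forall x y : K, x != 0 -> y != 0 -> x + y != 0 ->
               Num.min (pval x) (pval y) <= pval (x + y);
  pval_rat : forall q : rat, q != 0 ->
               ratr q != 0 :> K /\ pval (ratr q) = rat_pval p q;
  rat_dense : forall (x : K) (m : int), exists q : rat, vclose pval m x (ratr q);
  complete : forall s : nat -> K,
    (forall m : int, exists N, forall i j, (N <= i)%N -> (N <= j)%N ->
        vclose pval m (s i) (s j)) ->
    exists l : K, forall m : int, exists N, forall i, (N <= i)%N -> vclose pval m (s i) l
}.

Definition qform (K : fieldType) (n : nat) (A : 'M[K]_n) (x : 'I_n -> K) : K :=
  \sum_(i < n) \sum_(j < n) A i j * x i * x j.

Definition anisotropic (K : fieldType) (n : nat) (A : 'M[K]_n) : Prop :=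
  forall x : 'I_n -> K, (exists i, x i != 0) -> qform A x != 0.

Definition qvalues_Z (K : fieldType) (n : nat) (A : 'M[K]_n) : K -> Prop :=
  fun a => exists x : 'I_n -> int, a = qform A (fun i => (x i)%:~R).

Definition ratio_set (K : fieldType) (S : K -> Prop) : K -> Prop :=
  fun c => exists a b, S a /\ S b /\ b != 0 /\ c = a / b.

Definition pdense (p : nat) (K : fieldType) (V : padic_field p K) (S : K -> Prop) : Prop :=
  forall (y : K) (m : int), exists c, S c /\ vclose (pval V) m y c.

(* Main.v *)
Require Import Defs.
From HB Require Import structures.
From mathcomp Require Import all_boot all_order all_algebra.
From mathcomp Require Import zify ring lra.
Set Implicit Arguments. Unset Strict Implicit. Unset Printing Implicit Defensive.
Import Order.TTheory GRing.Theory Num.Theory.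

Lemma sq_inj_mod (p C x y : nat) : prime p -> odd p -> ~~ (p %| C) ->
  x <= p./2 -> y <= p./2 -> C * x ^ 2 = C * y ^ 2 %[mod p] -> x = y.
Proof.
move=> hp ho hC.
have hp2 := odd_double_half p. rewrite ho -addnn in hp2.
wlog hyx : x y / y <= x.
  move=> H hx hy e. case: (leqP y x) => h; first exact: H.
  apply/esym. apply: H => //; lia.
move=> hx hy /eqP. rewrite eqn_mod_dvd; last by rewrite leq_mul2l leq_exp2r // hyx orbT.
rewrite -mulnBr Gauss_dvdr; last by rewrite prime_coprime.
rewrite subn_sqr Euclid_dvdM // => /orP [] hd.
  case: (posnP (x - y)) => h0; first lia.
  have := dvdn_leq h0 hd. lia.
case: (posnP (x + y)) => h0; first lia.
have := dvdn_leq h0 hd. lia.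
Qed.

Lemma pigeon (h n : nat) (f g : 'I_h -> 'I_n) : injective f -> injective g ->
  n < h + h -> exists x y, f x = g y.
Proof.
move=> hf hg hn.
set A := [set f x | x : 'I_h]. set B := [set g x | x : 'I_h].
have cA : #|A| = h by rewrite card_imset // card_ord.
have cB : #|B| = h by rewrite card_imset // card_ord.
case: (set_0Vmem (A :&: B)) => [e|[z]].
  have := cardsU A B. rewrite e cards0 subn0 cA cB => e2.
  have := max_card (A :|: B). rewrite e2 card_ord. lia.
rewrite inE => /andP [/imsetP [x _ ->] /imsetP [y _ e]]. by exists x, y.
Qed.

Lemma two_squares_mod (p U1 U2 W : nat) : prime p -> odd p -> ~~ (p %| U1) -> ~~ (p %| U2) ->
  exists x y : nat, U1 * x ^ 2 + U2 * y ^ 2 = W %[mod p].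
Proof.
move=> hp ho h1 h2.
have hp0 : 0 < p by apply: prime_gt0.
have hp2 := odd_double_half p. rewrite ho -addnn in hp2.
pose f (x : 'I_(p./2).+1) : 'I_p := Ordinal (ltn_pmod (U1 * x ^ 2) hp0).
pose g (x : 'I_(p./2).+1) : 'I_p := Ordinal (ltn_pmod (W + (p - 1) * U2 * x ^ 2) hp0).
have hf : injective f.
  move=> x y /(congr1 val) /= e. apply: val_inj. apply: (sq_inj_mod hp ho h1) => //.
  - exact: ltn_ord x.
  - exact: ltn_ord y.
have hC : ~~ (p %| (p - 1) * U2).
  rewrite Euclid_dvdM // negb_or h2 andbT. apply/negP => hd.
  have hp1 : 0 < p - 1 by have := prime_gt1 hp; lia.
  have := dvdn_leq hp1 hd. lia.
have hg : injective g.
  move=> x y /(congr1 val) /= e. apply: val_inj.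
  move/eqP: e. rewrite eqn_modDl => /eqP e.
  apply: (sq_inj_mod hp ho hC) => //.
  - exact: ltn_ord x.
  - exact: ltn_ord y.
have [x [y /(congr1 val) /= e]] := pigeon hf hg ltac:(lia).
exists x, y.
rewrite -modnDml e modnDml.
rewrite -mulnA. set k := U2 * _ ^ 2.
have hk : (p - 1) * k + k = p * k by rewrite -mulSnr; congr (_ * _); lia.
have -> : W + (p - 1) * k + k = k * p + W by lia.
by rewrite modnMDl.
Qed.

Lemma nonres (p : nat) : prime p -> odd p -> exists e, ~~ (p %| e) /\ forall z, e != z ^ 2 %[mod p].
Proof.
move=> hp ho.
have hp0 : 0 < p by apply: prime_gt0.
have hp1 := prime_gt1 hp.
have hp2 := odd_double_half p. rewrite ho -addnn in hp2.
pose f (x : 'I_(p./2).+1) : 'I_p := Ordinal (ltn_pmod (x ^ 2) hp0).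
set A := [set f x | x : 'I_(p./2).+1].
have cA : #|A| <= p./2.+1 by rewrite (leq_trans (leq_imset_card _ _)) // card_ord.
have [e he] : exists e : 'I_p, e \notin A.
  apply/existsP. rewrite -negb_forall. apply/negP => /forallP hall.
  have : #|'I_p| <= #|A| by apply: subset_leq_card; apply/subsetP => y _; exact: hall.
  rewrite card_ord; lia.
have key : forall z, (z ^ 2) %% p != e.
  move=> z. apply/negP => /eqP hz. move: he. apply/negP; rewrite negbK.
  set r := z %% p.
  have hr : r < p by apply: ltn_pmod.
  have hzr : z ^ 2 = r ^ 2 %[mod p] by rewrite /r modnXm.
  case: (leqP r p./2) => hle.
    apply/imsetP. exists (Ordinal (hle : r < p./2.+1)) => //. apply: val_inj => /=.
    by rewrite -hz hzr.
  have hle' : p - r < p./2.+1 by lia.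
  apply/imsetP. exists (Ordinal hle') => //. apply: val_inj => /=.
  rewrite -hz hzr.
  have hid : forall s r : nat, s ^ 2 + r * 2 * (s + r) = r ^ 2 + s * (s + r) + (s + r) * r.
    by move=> s0 r0; ring.
  have := hid (p - r) r. rewrite subnK; last lia.
  move=> eq.
  have e1 : ((p - r) ^ 2 + (r * 2) * p) %% p = (p - r) ^ 2 %% p by rewrite addnC modnMDl.
  have e2 : (r ^ 2 + (p - r) * p + p * r) %% p = r ^ 2 %% p.
    by rewrite -addnA [p * r]mulnC -mulnDl addnC modnMDl.
  by rewrite -e1 eq e2.
exists e. split.
  apply/negP => hd. have e0 : (e : nat) = 0.
    case: (posnP e) => // h0. have := dvdn_leq h0 hd. have := ltn_ord e. lia.
  move: (key 0). rewrite /= mod0n. move/eqP => h. apply: h. apply/esym. exact: e0.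
move=> z. rewrite (modn_small (ltn_ord e)) eq_sym. exact: key z.
Qed.

Fixpoint dec2 (fuel n : nat) : nat * nat :=
  match fuel with
  | 0 => (0, n)
  | f.+1 => if odd n || (n == 0) then (0, n) else let kn := dec2 f n./2 in (kn.1.+1, kn.2)
  end.
Definition sqrel (a b : nat) (neg : bool) : bool :=
  let ka := dec2 a a in let kb := dec2 b b in
  [&& odd ka.2, odd kb.2, ~~ odd (ka.1 + kb.1) &
     (if neg then (ka.2 + kb.2) %% 8 == 0 else (ka.2 + 7 * kb.2) %% 8 == 0)].
Definition S8 : seq nat := [:: 1; 3; 5; 7; 2; 6; 10; 14].
Definition box : seq (nat * nat * nat) :=
  [seq (xy, z) | xy <- [seq (x, y) | x <- iota 0 4, y <- iota 0 4], z <- iota 0 4].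
Definition ybox : seq (nat * nat * nat) := [:: (1,0,0); (0,1,0); (0,0,1); (1,1,1)].
Definition q3n (r1 r2 r3 : nat) (x : nat * nat * nat) := r1 * x.1.1 ^ 2 + r2 * x.1.2 ^ 2 + r3 * x.2 ^ 2.
Definition isow (r1 r2 r3 : nat) : bool :=
  has (fun x => [&& 0 < x.2, 0 < r1 * x.1.1 ^ 2 + r2 * x.1.2 ^ 2 &
        sqrel (r1 * x.1.1 ^ 2 + r2 * x.1.2 ^ 2) (r3 * x.2 ^ 2) true]) box.
Definition ratw (r1 r2 r3 c : nat) : bool :=
  has (fun y => has (fun x => (0 < q3n r1 r2 r3 x) && (0 < c * q3n r1 r2 r3 y) && sqrel (q3n r1 r2 r3 x) (c * q3n r1 r2 r3 y) false) box) ybox.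
Definition check3 : bool :=
  all (fun r1 => all (fun r2 => all (fun r3 => isow r1 r2 r3 || all (fun c => ratw r1 r2 r3 c) S8) S8) S8) S8.
Lemma check3_ok : check3 = true. Proof. vm_compute. reflexivity. Qed.
Definition c2of (d : nat) : nat := if d \in [:: 1; 5; 6; 14] then 3 else if d == 3 then 2 else 5.
Definition check2 (d c : nat) : bool :=
  all (fun x => all (fun y => (odd x || odd y) ==> all (fun j => (x ^ 2 + d * y ^ 2) %% 32 != (c * 4 ^ j) %% 32) (iota 0 4)) (iota 0 32)) (iota 0 32).
Lemma check2_ok : all (fun d => (d != 7) ==> check2 d (c2of d)) S8 = true.
Proof. vm_compute. reflexivity. Qed.

Local Open Scope ring_scope.

Section Padic.
Variables (p : nat) (hp : prime p) (K : fieldType) (V : padic_field p K).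
Local Notation v := (pval V).

Definition sm (m : int) (x : K) := x = 0 \/ m <= v x.

Lemma v1 : v 1 = 0.
Proof.
have h : v (1 * 1) = v 1 + v 1 by apply: pval_mul; exact: oner_neq0.
rewrite mulr1 in h. lia.
Qed.

Lemma vM x y : x != 0 -> y != 0 -> v (x * y) = v x + v y.
Proof. exact: pval_mul. Qed.

Lemma vN1 : v (-1) = 0.
Proof.
have h1 : (-1 : K) != 0 by rewrite oppr_eq0 oner_neq0.
have := vM h1 h1. rewrite mulrNN mulr1 v1. lia.
Qed.

Lemma vN x : v (- x) = v x.
Proof.
case: (eqVneq x 0) => [->|hx]; first by rewrite oppr0.
have h1 : (-1 : K) != 0 by rewrite oppr_eq0 oner_neq0.
by rewrite -mulN1r vM // vN1 add0r.
Qed.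

Lemma vV x : x != 0 -> v x^-1 = - v x.
Proof.
move=> hx. have hi : x^-1 != 0 by rewrite invr_eq0.
have := vM hx hi. rewrite mulfV // v1. lia.
Qed.

Lemma vD x y : x / y != 0 -> v (x / y) = v x - v y.
Proof.
move=> h. have hx : x != 0 by apply: contraNneq h => ->; rewrite mul0r.
have hy : y != 0 by apply: contraNneq h => ->; rewrite invr0 mulr0.
by rewrite vM ?invr_eq0 // vV.
Qed.

Lemma vX x n : x != 0 -> v (x ^+ n) = v x *+ n.
Proof.
move=> hx; elim: n => [|n IH]; first by rewrite expr0 v1.
by rewrite exprS vM ?expf_neq0 // IH mulrS.
Qed.

Lemma vsq x : x != 0 -> v (x ^+ 2) = 2 * v x.
Proof. move=> hx; rewrite vX //. lia. Qed.

Lemma v_int (z : int) : z != 0 -> (z%:~R : K) != 0 /\ v z%:~R = (logn p `|z|%N)%:Z.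
Proof.
move=> hz. have hq : (z%:Q) != 0 by rewrite intr_eq0.
have [h1 h2] := pval_rat V hq. rewrite ratr_int in h1 h2.
split => //. rewrite h2 /rat_pval numq_int denq_int /= logn1. lia.
Qed.

Lemma int_neq0 (z : int) : z != 0 -> (z%:~R : K) != 0.
Proof. by move=> hz; case: (v_int hz). Qed.

Lemma nat_neq0 (n : nat) : (n != 0)%N -> (n%:R : K) != 0.
Proof. move=> hn. have := @int_neq0 n. rewrite pmulrn. apply. lia. Qed.

Lemma v_nat (n : nat) : (0 < n)%N -> v n%:R = (logn p n)%:Z.
Proof. move=> hn. have := @v_int n. rewrite pmulrn => h. case: h => //. lia. Qed.

Lemma v_nat_ge0 (n : nat) : (0 < n)%N -> 0 <= v n%:R.
Proof. move=> hn; rewrite v_nat //. Qed.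

Lemma v_int_ge0 (z : int) : z != 0 -> 0 <= v z%:~R.
Proof. by move=> hz; case: (v_int hz) => _ ->. Qed.

Lemma p_gt1 : (1 < p)%N. Proof. exact: prime_gt1. Qed.

Lemma p_neq0 : (p%:R : K) != 0.
Proof. apply: nat_neq0. have := p_gt1. lia. Qed.

Lemma v_p : v p%:R = 1.
Proof. rewrite v_nat ?prime_gt0 // logn_prime // eqxx. done. Qed.

Lemma v_strict x y : x != 0 -> (y = 0 \/ v x < v y) -> v (x + y) = v x.
Proof.
move=> hx; case: (eqVneq y 0) => [->|hy]; first by rewrite addr0.
move=> [e|hlt]; first by move: hy; rewrite e eqxx.
have hxy : x + y != 0.
  apply/eqP => e. have : y = - x by rewrite -(addKr x y) e addr0.
  move=> ey; move: hlt; rewrite ey vN; lia.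
have h1 := pval_add V hx hy hxy.
have hny : - y != 0 by rewrite oppr_eq0.
have : x = (x + y) + - y by rewrite addrK.
move=> ex.
have h2 := pval_add V hxy hny. rewrite -ex in h2. have h2' := h2 hx.
rewrite vN in h2'. move: h1 h2' hlt. set a := v x. set b := v y. set c := v (x + y). lia.
Qed.

Lemma sm_v_ge x m : sm m x -> x != 0 -> m <= v x.
Proof. by move=> [->|//]; rewrite eqxx. Qed.

Lemma v_add_ge x y m : sm m x -> sm m y -> sm m (x + y).
Proof.
case: (eqVneq x 0) => [->|hx]; first by rewrite add0r.
case: (eqVneq y 0) => [->|hy]; first by rewrite addr0.
move=> h1 h2. have {h1}h1 := sm_v_ge h1 hx. have {h2}h2 := sm_v_ge h2 hy.
case: (eqVneq (x + y) 0) => [|hxy]; first by left.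
right. have := pval_add V hx hy hxy. move: h1 h2.
set a := v x. set b := v y. set c := v (x + y). lia.
Qed.

Lemma sm0 m : sm m 0. Proof. by left. Qed.
Lemma smD m x y : sm m x -> sm m y -> sm m (x + y). Proof. exact: v_add_ge. Qed.
Lemma smN m x : sm m x -> sm m (- x).
Proof. by move=> [->|h]; [left; rewrite oppr0|right; rewrite vN]. Qed.
Lemma smB m x y : sm m x -> sm m y -> sm m (x - y).
Proof. by move=> h1 h2; apply: smD => //; apply: smN. Qed.
Lemma sm_le m m' x : m' <= m -> sm m x -> sm m' x.
Proof. move=> hm [->|h]; [left|right] => //. lia. Qed.
Lemma smM m k x y : sm m x -> sm k y -> sm (m + k) (x * y).
Proof.
move=> [->|h1]; first by rewrite mul0r; left.
move=> [->|h2]; first by rewrite mulr0; left.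
case: (eqVneq x 0) => [->|hx]; first by rewrite mul0r; left.
case: (eqVneq y 0) => [->|hy]; first by rewrite mulr0; left.
right; rewrite vM //. lia.
Qed.
Lemma sm_v x : x != 0 -> sm (v x) x. Proof. by move=> _; right. Qed.
Lemma smMv m x y : sm m x -> sm (m + v y) (x * y).
Proof.
case: (eqVneq y 0) => [->|hy]; first by rewrite mulr0; left.
by move=> h; apply: smM => //; apply: sm_v.
Qed.
Lemma smMv' m x y : sm m x -> sm (v y + m) (y * x).
Proof. by move=> h; rewrite mulrC addrC; apply: smMv. Qed.
Lemma sm_all x : (forall m, sm m x) -> x = 0.
Proof.
move=> h. case: (eqVneq x 0) => // hx.
have := sm_v_ge (h (v x + 1)) hx. lia.
Qed.
Lemma sm_nat k (n : nat) : (p ^ k %| n)%N -> sm k%:Z n%:R.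
Proof.
case: (posnP n) => [->|hn]; first by left.
move=> hd; right. rewrite v_nat //. by rewrite pfactor_dvdn in hd.
Qed.
Lemma sm_int k (z : int) : (p ^ k %| `|z|)%N -> sm k%:Z z%:~R.
Proof.
case: (eqVneq z 0) => [->|hz]; first by left.
move=> hd; right. case: (v_int hz) => _ ->. rewrite pfactor_dvdn // in hd; lia.
Qed.
Lemma int_sm k (z : int) : sm k%:Z z%:~R -> (p ^ k %| `|z|)%N.
Proof.
case: (eqVneq z 0) => [->|hz]; first by rewrite dvdn0.
move=> [e|h]; first by move: (int_neq0 hz); rewrite e eqxx.
case: (v_int hz) => _ e. rewrite e in h. rewrite pfactor_dvdn //; lia.
Qed.
Lemma int_sm_nat k (n : nat) : sm k%:Z n%:R -> (p ^ k %| n)%N.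
Proof. move=> h. apply: (@int_sm k n%:Z). by rewrite -pmulrn. Qed.

Lemma sm_int_ge0 (z : int) : sm 0 z%:~R.
Proof. case: (eqVneq z 0) => [->|hz]; first by left. by right; apply: v_int_ge0. Qed.
Lemma sm_nat_ge0 (n : nat) : sm 0 n%:R.
Proof. have := sm_int_ge0 n. by rewrite pmulrn. Qed.

Lemma vcloseE m x y : vclose (pval V) m x y <-> sm m (x - y).
Proof.
rewrite /vclose /sm; split => -[h|h]; [left; rewrite h subrr|right|left|right] => //.
by apply/eqP; rewrite -subr_eq0 h.
Qed.



Lemma rat_approx (q : rat) (M : nat) : sm 0 (ratr q) ->
  exists z : int, sm M%:Z (ratr q - z%:~R).
Proof.
case: (eqVneq q 0) => [->|hq].
  move=> _; exists 0. have -> : (ratr 0 : K) - 0%:~R = 0 by rewrite /ratr /= mulr0z mul0r subr0. by left.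
move=> h.
have [hq0 hv] := pval_rat V hq.
have h0 := sm_v_ge h hq0. rewrite hv /rat_pval in h0.
set a := numq q in h0 *. set b := denq q in h0 *.
have hb0 : (0 < `|b|)%N by rewrite absz_gt0 denq_neq0.
have ndiv : ~~ (p %| `|b|)%N.
  apply/negP => hd.
  have h1 : (1 <= logn p `|b|)%N by rewrite -pfactor_dvdn // expn1.
  have ha0 : (0 < `|a|)%N by rewrite absz_gt0 numq_eq0.
  have h2 : (p ^ 1 %| `|a|)%N by rewrite pfactor_dvdn //; lia.
  rewrite expn1 in h2.
  have := coprime_num_den q. rewrite /coprime => /eqP hg.
  have : (p %| gcdn `|a| `|b|)%N by rewrite dvdn_gcd h2 hd.
  rewrite -/a -/b hg dvdn1 => /eqP hp1. by move: (prime_gt1 hp); rewrite hp1.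
have cop : coprimez b (p%:Z ^+ M).
  apply: coprimezXr. rewrite coprimezE /= coprime_sym prime_coprime //.
have [[u w] /= huw] := coprimezP _ _ cop.
exists (u * a).
have eK : (u%:~R * b%:~R + w%:~R * (p%:R ^+ M) : K) = 1.
  have := congr1 (fun z : int => (z%:~R : K)) huw. by rewrite /= rmorphD !rmorphM /= rmorphXn /= rmorph1.
have hbK : (b%:~R : K) != 0 by apply: int_neq0; exact: denq_neq0.
have -> : ratr q - (u * a)%:~R = (a%:~R * w%:~R * (p%:R ^+ M)) * (b%:~R : K)^-1.
  rewrite /ratr -/a -/b rmorphM /=.
  have -> : (a%:~R : K) * w%:~R * (p%:R ^+ M) = a%:~R * ((u%:~R * b%:~R + w%:~R * (p%:R ^+ M)) - u%:~R * b%:~R) by ring.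
  rewrite eK.
  field. done.
have vb : v (b%:~R)^-1 = 0.
  rewrite vV //. have [_ ->] := v_int (denq_neq0 q).
  have -> : logn p `|b| = 0%N by rewrite -/b; apply: logn_coprime; rewrite prime_coprime.
  done.
have hP : sm M%:Z (p%:R ^+ M : K) by right; rewrite vX ?p_neq0 // v_p; lia.
have h1 := smM (sm_int_ge0 (a * w)) hP. rewrite add0r rmorphM /= in h1.
have := smMv (b%:~R : K)^-1 h1. by rewrite vb addr0.
Qed.

Lemma int_approx (x : K) (M : nat) : sm 0 x -> exists z : int, sm M%:Z (x - z%:~R).
Proof.
move=> hx.
have [q hq] := rat_dense V x M%:Z. move/vcloseE: hq => hq.
have hq0 : sm 0 (ratr q).
  have -> : ratr q = x - (x - ratr q) by rewrite subKr.
  apply: smB => //. apply: sm_le hq. lia.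
have [z hz] := rat_approx M hq0.
exists z. have -> : x - z%:~R = (x - ratr q) + (ratr q - z%:~R) by rewrite addrA subrK.
exact: smD.
Qed.

Definition pz (k : int) : K := (p%:R : K) ^ k.

Lemma pz_neq0 k : pz k != 0.
Proof. apply: expfz_neq0. exact: p_neq0. Qed.

Lemma pzD a b : pz (a + b) = pz a * pz b.
Proof. apply: expfzDr. exact: p_neq0. Qed.

Lemma v_pz k : v (pz k) = k.
Proof.
rewrite /pz. case: k => n.
  rewrite -exprnP vX ?p_neq0 // v_p. lia.
rewrite NegzE -exprnN vV ?expf_neq0 ?p_neq0 // vX ?p_neq0 // v_p. lia.
Qed.

Lemma pz_sq k : pz (k + k) = pz k ^+ 2.
Proof. by rewrite pzD expr2. Qed.

Lemma pz_nat (n : nat) : pz n = p%:R ^+ n.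
Proof. by rewrite /pz -exprnP. Qed.

Lemma pz1 : pz 1 = p%:R.
Proof. by rewrite pz_nat expr1. Qed.

Lemma pz0 : pz 0 = 1.
Proof. by rewrite pz_nat expr0. Qed.

Lemma factor_v (x : K) : x != 0 -> exists u, v u = 0 /\ u != 0 /\ x = pz (v x) * u.
Proof.
move=> hx. exists (x / pz (v x)). have hp0 := pz_neq0 (v x).
split; last split.
- rewrite vM ?invr_eq0 // vV // v_pz. lia.
- by rewrite mulf_neq0 ?invr_eq0.
- by field.
Qed.

Lemma int_parity (k : int) : exists q e, (e == 0) || (e == 1) /\ k = q + q + e.
Proof.
case: (boolP (odd `|k|%N)) => ho.
- exists ((k - 1) %/ 2)%Z, 1. split; first by rewrite eqxx orbT.
  lia.
- exists (k %/ 2)%Z, 0. split; first by rewrite eqxx. lia.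
Qed.


Lemma two_neq0 : (2%:R : K) != 0.
Proof. exact: nat_neq0. Qed.

Lemma v2_ge0 : 0 <= v 2%:R.
Proof. exact: v_nat_ge0. Qed.

Lemma near1 k s : 1 <= k -> sm k (s - 1) -> s != 0 /\ v s = 0.
Proof.
move=> hk h. case: (eqVneq s 0) => [e|hs].
  rewrite e sub0r in h. have := sm_v_ge h. rewrite vN v1 oppr_eq0 oner_neq0 => /(_ isT). lia.
split => //. have -> : s = 1 + (s - 1) by rewrite addrC subrK.
have h1 : (1 : K) != 0 := oner_neq0 K.
have h2 : s - 1 = 0 \/ v 1 < v (s - 1).
  case: h => [e|h]; [by left|right]. rewrite v1. lia.
rewrite (v_strict h1 h2). exact: v1.
Qed.

Fixpoint newt (t : K) (k : nat) : K :=
  match k with 0 => 1 | k'.+1 => let s := newt t k' in (s + t / s) / 2%:R end.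

Lemma hensel_sq t : sm (2 * v 2%:R + 1) (t - 1) -> exists s, s != 0 /\ t = s ^+ 2.
Proof.
move=> ht. set c := v 2%:R in ht.
have c0 : 0 <= c := v2_ge0.
pose s := newt t.
have inv : forall k, sm (c + 1) (s k - 1) /\ sm (2 * c + (2 ^ k)%N%:Z) (s k ^+ 2 - t).
  elim => [|k [IH1 IH2]].
    rewrite /s /= subrr expr1n. split; first by left.
    have -> : 1 - t = - (t - 1) by rewrite opprB. apply: smN. apply: sm_le ht. rewrite expn0. lia.
  have [hs0 hsv] := near1 (k := c + 1) ltac:(lia) IH1.
  have h2s : 2%:R * s k != 0 by rewrite mulf_neq0 ?two_neq0.
  have v2s : v (2%:R * s k) = c by rewrite vM ?two_neq0 // hsv addr0.
  have e1 : s k.+1 - s k = - (s k ^+ 2 - t) * (2%:R * s k)^-1.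
    rewrite /s /=. field. by rewrite two_neq0 hs0.
  have e2 : s k.+1 ^+ 2 - t = (s k ^+ 2 - t) ^+ 2 * ((2%:R * s k) ^+ 2)^-1.
    rewrite /s /=. field. by rewrite two_neq0 hs0.
  have d1 : sm (c + (2 ^ k)%N%:Z) (s k.+1 - s k).
    rewrite e1. have := smMv (2%:R * s k)^-1 (smN IH2). rewrite vV // v2s.
    apply: sm_le. lia.
  split.
    have -> : s k.+1 - 1 = (s k - 1) + (s k.+1 - s k) by ring.
    apply: smD => //. apply: sm_le d1. have := ltn_expl k (isT : (1 < 2)%N). lia.
  rewrite e2. have := smMv ((2%:R * s k) ^+ 2)^-1 (smM IH2 IH2).
  rewrite vV ?expf_neq0 // vsq // v2s expnS. apply: sm_le. lia.
have dif : forall k, sm (c + (2 ^ k)%N%:Z) (s k.+1 - s k).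
  move=> k. have [IH1 IH2] := inv k.
  have [hs0 hsv] := near1 (k := c + 1) ltac:(lia) IH1.
  have h2s : 2%:R * s k != 0 by rewrite mulf_neq0 ?two_neq0.
  have v2s : v (2%:R * s k) = c by rewrite vM ?two_neq0 // hsv addr0.
  have e1 : s k.+1 - s k = - (s k ^+ 2 - t) * (2%:R * s k)^-1.
    rewrite /s /=. field. by rewrite two_neq0 hs0.
  rewrite e1. have := smMv (2%:R * s k)^-1 (smN IH2). rewrite vV // v2s.
  apply: sm_le. lia.
have tele : forall N i, (N <= i)%N -> sm (c + (2 ^ N)%N%:Z) (s i - s N).
  move=> N; elim => [|i IH] hi.
    have -> : N = 0%N by lia. rewrite subrr. by left.
  case: (eqVneq N i.+1) => [->|hne]; first by rewrite subrr; left.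
  have hi' : (N <= i)%N by lia.
  have -> : s i.+1 - s N = (s i.+1 - s i) + (s i - s N) by ring.
  apply: smD; last exact: IH.
  apply: sm_le (dif i). have := leq_pexp2l (isT : (0 < 2)%N) hi'. lia.
have cauchy : forall m : int, exists N, forall i j, (N <= i)%N -> (N <= j)%N ->
    vclose (pval V) m (s i) (s j).
  move=> m. exists (absz m) => i j hi hj. apply/vcloseE.
  have -> : s i - s j = (s i - s (absz m)) - (s j - s (absz m)) by ring.
  have hN := ltn_expl (absz m) (isT : (1 < 2)%N).
  apply: smB; apply: sm_le (tele _ _ _) => //; lia.
have [l hl] := complete cauchy.
have hsq : l ^+ 2 - t = 0.
  apply: sm_all => m.
  have [N hN] := hl (Num.max m 0).
  pose i := maxn N (absz m).
  have := hN i (leq_maxl _ _). move/vcloseE => hi.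
  have [_ IH2] := inv i.
  have [hs0 hsv] := near1 (k := c + 1) ltac:(lia) (proj1 (inv i)).
  have -> : l ^+ 2 - t = - (s i - l) * ((s i - l) * -1 + 2%:R * s i) + (s i ^+ 2 - t) by ring.
  apply: smD.
    have h0 : sm 0 ((s i - l) * -1 + 2%:R * s i).
      apply: smD.
        have := smMv (-1) hi. rewrite vN1 addr0. apply: sm_le. lia.
      right. by rewrite vM ?two_neq0 // hsv addr0.
    have := smM (smN hi) h0. rewrite addr0. apply: sm_le. lia.
  apply: sm_le IH2. have := ltn_expl i (isT : (1 < 2)%N).
  have : (absz m <= i)%N by apply: leq_maxr. lia.
have ht0 : t != 0.
  apply/eqP => e. rewrite e sub0r in ht. have := sm_v_ge ht. rewrite vN v1 oppr_eq0 oner_neq0 => /(_ isT). lia.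
exists l. split.
  apply/eqP => e. move: hsq. rewrite e expr0n /= sub0r => /eqP. by rewrite oppr_eq0 (negbTE ht0).
by apply/eqP; rewrite eq_sym -subr_eq0 hsq.
Qed.


Lemma nat_approx (x : K) (M : nat) : sm 0 x -> exists n : nat, sm M%:Z (x - n%:R).
Proof.
move=> hx. have [z hz] := int_approx M hx.
set d : int := (p ^ M)%N%:Z.
have hpM : (0 < p ^ M)%N by rewrite expn_gt0 prime_gt0.
have hd : d != 0 by rewrite /d; lia.
exists (absz (z %% d)%Z).
have e1 : ((absz (z %% d)%Z)%:R : K) = ((z %% d)%Z)%:~R.
  by rewrite pmulrn gez0_abs // modz_ge0.
have -> : x - (absz (z %% d)%Z)%:R = (x - z%:~R) + ((z %/ d)%Z%:~R * p%:R ^+ M).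
  have hz' : (z%:~R : K) = (z %/ d)%Z%:~R * (p%:R ^+ M) + (z %% d)%Z%:~R.
    rewrite {1}(divz_eq z d) intrD intrM /d -pmulrn natrX. done.
  rewrite e1 hz'. ring.
apply: smD => //. have := smM (sm_int_ge0 (z %/ d)%Z) (m := 0) (k := M%:Z) (y := p%:R ^+ M).
rewrite add0r. apply. right. rewrite vX ?p_neq0 // v_p. lia.
Qed.

Lemma sm_modn (a b k : nat) : a = b %[mod p ^ k] -> sm k%:Z (a%:R - b%:R).
Proof.
case: (leqP b a) => hab.
  move/eqP. rewrite eqn_mod_dvd // => hd. rewrite -natrB //. exact: sm_nat.
move/esym/eqP. rewrite eqn_mod_dvd; last lia. move=> hd.
have -> : (a%:R : K) - b%:R = - (b - a)%:R by rewrite natrB; [ring|lia].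
apply: smN. exact: sm_nat.
Qed.

Lemma modn_sm (a b k : nat) : sm k%:Z (a%:R - b%:R) -> a = b %[mod p ^ k].
Proof.
case: (leqP b a) => hab.
  rewrite -natrB // => h. apply/eqP. rewrite eqn_mod_dvd //. exact: int_sm_nat.
have -> : (a%:R : K) - b%:R = - (b - a)%:R by rewrite natrB; [ring|lia].
move/smN. rewrite opprK => h. apply/esym/eqP. rewrite eqn_mod_dvd; last lia. exact: int_sm_nat.
Qed.

Lemma v2_odd : p != 2%N -> v 2%:R = 0.
Proof. move=> h2. rewrite v_nat // logn_prime //. by case: eqP h2 => // ->. Qed.

Lemma v2_two : p = 2%N -> v 2%:R = 1.
Proof. move=> h2. rewrite v_nat // logn_prime // h2. done. Qed.

Lemma unit_sm1 (u : K) : v u = 0 -> u != 0 -> ~ sm 1 u.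
Proof. move=> hv hu h. have := sm_v_ge h hu. lia. Qed.

Lemma approx_unit (u : K) (M : nat) : v u = 0 -> u != 0 -> (0 < M)%N ->
  exists n : nat, ~~ (p %| n)%N /\ sm M%:Z (u - n%:R).
Proof.
move=> hv hu hM. have [n hn] := nat_approx M (or_intror (eq_ind_r (fun z => 0 <= z) (lexx 0) hv)).
exists n. split => //. apply/negP => hd.
have h1 : sm 1 (n%:R : K) by apply: sm_nat; rewrite expn1.
apply: (unit_sm1 hv hu). have -> : u = (u - n%:R) + n%:R by rewrite subrK.
apply: smD => //. apply: sm_le hn. lia.
Qed.


Definition q3 (a b c x y z : K) := a * x ^+ 2 + b * y ^+ 2 + c * z ^+ 2.
Definition ratio3 (a b c t : K) := exists x y z x' y' z',
  q3 a b c x' y' z' != 0 /\ t = q3 a b c x y z / q3 a b c x' y' z'.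
Definition aniso3 (a b c : K) := forall x y z,
  (x != 0) || (y != 0) || (z != 0) -> q3 a b c x y z != 0.

Lemma ratio3_scale a b c l s1 s2 s3 t : l != 0 ->
  ratio3 (l * a * s1 ^+ 2) (l * b * s2 ^+ 2) (l * c * s3 ^+ 2) t -> ratio3 a b c t.
Proof.
move=> hl [x [y [z [x' [y' [z' [h0 ->]]]]]]].
have e : forall x y z, q3 (l * a * s1 ^+ 2) (l * b * s2 ^+ 2) (l * c * s3 ^+ 2) x y z
   = l * q3 a b c (s1 * x) (s2 * y) (s3 * z) by move=> *; rewrite /q3; ring.
rewrite !e in h0 *. exists (s1 * x), (s2 * y), (s3 * z), (s1 * x'), (s2 * y'), (s3 * z').
have h1 : q3 a b c (s1 * x') (s2 * y') (s3 * z') != 0 by apply: contraNneq h0 => ->; rewrite mulr0.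
split => //. field. by rewrite hl h1.
Qed.

Lemma aniso3_scale a b c l s1 s2 s3 : l != 0 -> s1 != 0 -> s2 != 0 -> s3 != 0 ->
  aniso3 a b c -> aniso3 (l * a * s1 ^+ 2) (l * b * s2 ^+ 2) (l * c * s3 ^+ 2).
Proof.
move=> hl h1 h2 h3 ha x y z hxyz.
have -> : q3 (l * a * s1 ^+ 2) (l * b * s2 ^+ 2) (l * c * s3 ^+ 2) x y z
   = l * q3 a b c (s1 * x) (s2 * y) (s3 * z) by rewrite /q3; ring.
rewrite mulf_neq0 // ha //. by rewrite !mulf_eq0 (negbTE h1) (negbTE h2) (negbTE h3).
Qed.

Lemma ratio3_swap a b c t : ratio3 a c b t -> ratio3 a b c t.
Proof.
move=> [x [y [z [x' [y' [z' [h0 ->]]]]]]].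
exists x, z, y, x', z', y'. have e : forall x y z, q3 a c b x y z = q3 a b c x z y
  by move=> *; rewrite /q3; ring.
by rewrite !e in h0 *.
Qed.

Lemma aniso3_swap a b c : aniso3 a b c -> aniso3 a c b.
Proof.
move=> h x y z hx. have -> : q3 a c b x y z = q3 a b c x z y by rewrite /q3; ring.
apply: h. move: hx. by case: (x != 0); case: (y != 0); case: (z != 0).
Qed.

Lemma ratio3_cyc a b c t : ratio3 b c a t -> ratio3 a b c t.
Proof.
move=> [x [y [z [x' [y' [z' [h0 ->]]]]]]].
exists z, x, y, z', x', y'. have e : forall x y z, q3 b c a x y z = q3 a b c z x y
  by move=> *; rewrite /q3; ring.
by rewrite !e in h0 *.
Qed.

Lemma aniso3_cyc a b c : aniso3 a b c -> aniso3 b c a.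
Proof.
move=> h x y z hx. have -> : q3 b c a x y z = q3 a b c z x y by rewrite /q3; ring.
apply: h. move: hx. by case: (x != 0); case: (y != 0); case: (z != 0).
Qed.

Lemma ratio3_sq a b c t s : s != 0 -> ratio3 a b c t -> ratio3 a b c (t * s ^+ 2).
Proof.
move=> hs [x [y [z [x' [y' [z' [h0 ->]]]]]]].
exists (s * x), (s * y), (s * z), x', y', z'. split => //.
rewrite /q3. field. move: h0. by rewrite /q3.
Qed.

Lemma aniso3_neq0 a b c : aniso3 a b c -> [/\ a != 0, b != 0 & c != 0].
Proof.
move=> h. split.
- have := h 1 0 0. rewrite /q3 expr1n expr0n /= !mulr0 !addr0 mulr1. apply. by rewrite oner_neq0.
- have := h 0 1 0. rewrite /q3 expr1n expr0n /= !mulr0 add0r addr0 mulr1. apply. by rewrite oner_neq0 orbT.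
- have := h 0 0 1. rewrite /q3 expr1n expr0n /= !mulr0 !add0r mulr1. apply. by rewrite oner_neq0 !orbT.
Qed.


Lemma odd_p : p != 2%N -> odd p.
Proof. move=> h. case: (even_prime hp) => // e. by move: h; rewrite e. Qed.

Lemma sm0_unit (u : K) : v u = 0 -> sm 0 u.
Proof. move=> h; right; rewrite h. done. Qed.

Lemma L1 u1 u2 w : p != 2%N -> v u1 = 0 -> v u2 = 0 -> v w = 0 ->
  u1 != 0 -> u2 != 0 -> w != 0 -> exists X Y, u1 * X ^+ 2 + u2 * Y ^+ 2 = w.
Proof.
move=> h2 hv1 hv2 hvw h1 h2' hw.
have ho := odd_p h2.
have [U1 [hU1 sU1]] := approx_unit (M:=1) hv1 h1 isT.
have [U2 [hU2 sU2]] := approx_unit (M:=1) hv2 h2' isT.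
have [W sW] := nat_approx 1 (sm0_unit hvw).
have [x [y hxy]] := two_squares_mod W hp ho hU1 hU2.
have hc : sm 1 ((U1 * x ^ 2 + U2 * y ^ 2)%N%:R - W%:R : K) by apply: sm_modn; rewrite expn1.
set E := u1 * x%:R ^+ 2 + u2 * y%:R ^+ 2 - w.
have hE : sm 1 E.
  have -> : E = (u1 - U1%:R) * x%:R ^+ 2 + (u2 - U2%:R) * y%:R ^+ 2 - (w - W%:R)
      + ((U1 * x ^ 2 + U2 * y ^ 2)%N%:R - W%:R).
    rewrite /E natrD !natrM ?natrX. ring.
  apply: smD => //. apply: smB; last done. apply: smD.
    have := smM sU1 (sm_nat_ge0 (x ^ 2)). rewrite addr0 natrX. done.
  have := smM sU2 (sm_nat_ge0 (y ^ 2)). rewrite addr0 natrX. done.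
set t := (u1 * x%:R ^+ 2 + u2 * y%:R ^+ 2) / w.
have ht : sm (2 * v 2%:R + 1) (t - 1).
  rewrite v2_odd // mulr0 add0r.
  have -> : t - 1 = E * w^-1 by rewrite /t /E; field.
  have := smMv w^-1 hE. by rewrite vV // hvw oppr0 addr0.
have [sq [hs0 hs]] := hensel_sq ht.
exists (x%:R / sq), (y%:R / sq).
have : t * w = w * sq ^+ 2 by rewrite hs mulrC.
rewrite /t. move=> e. rewrite !expr_div_n. 
have -> : u1 * (x%:R ^+ 2 / sq ^+ 2) + u2 * (y%:R ^+ 2 / sq ^+ 2) = ((u1 * x%:R ^+ 2 + u2 * y%:R ^+ 2) / w * w) / sq ^+ 2.
  field. by rewrite hw hs0.
rewrite e. field. by rewrite hs0.
Qed.


Lemma q3_z0 a b c x y : q3 a b c x y 0 = a * x ^+ 2 + b * y ^+ 2.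
Proof. by rewrite /q3 expr0n /= mulr0 addr0. Qed.
Lemma q3_00z a b c z : q3 a b c 0 0 z = c * z ^+ 2.
Proof. by rewrite /q3 expr0n /= !mulr0 !add0r. Qed.

Lemma pz_par q e : pz (q + q + e) = pz q ^+ 2 * pz e.
Proof. by rewrite pzD pz_sq. Qed.

Lemma CL0 u1 u2 b3 t : p != 2%N -> v u1 = 0 -> v u2 = 0 -> u1 != 0 -> u2 != 0 ->
  aniso3 u1 u2 b3 -> t != 0 -> ratio3 u1 u2 b3 t.
Proof.
move=> h2 hv1 hv2 h1 h2' ha ht0.
have [_ _ hb3] := aniso3_neq0 ha.
have [y1 [y2 hy]] := L1 h2 hv1 hv2 v1 h1 h2' (oner_neq0 K).
have [w [hvw [hw0 ht]]] := factor_v ht0.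
have [q [e [he hk]]] := int_parity (v t).
rewrite hk pz_par in ht.
case/orP: he => /eqP he; rewrite he in ht.
  have [X [Y hXY]] := L1 h2 hv1 hv2 hvw h1 h2' hw0.
  exists (pz q * X), (pz q * Y), 0, y1, y2, 0.
  rewrite !q3_z0 hy. split; first exact: oner_neq0.
  rewrite ht pz0 divr1 -hXY. ring.
have [u3 [hv3 [hu3 hb]]] := factor_v hb3.
have [h [e3 [he3 hk3]]] := int_parity (v b3).
rewrite hk3 pz_par in hb.
case/orP: he3 => /eqP he3; rewrite he3 in hb.
  have hvn : v (- u3) = 0 by rewrite vN.
  have hn0 : - u3 != 0 by rewrite oppr_eq0.
  have [X [Y hXY]] := L1 h2 hv1 hv2 hvn h1 h2' hn0.
  have := ha (pz h * X) (pz h * Y) 1. rewrite oner_neq0 !orbT => /(_ isT).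
  have -> : q3 u1 u2 b3 (pz h * X) (pz h * Y) 1 = pz h ^+ 2 * (u1 * X ^+ 2 + u2 * Y ^+ 2) + b3
    by rewrite /q3; ring.
  by rewrite hXY hb pz0 mulr1 mulrN addNr eqxx.
have hvq : v (u3 / w) = 0 by rewrite vM ?invr_eq0 // vV // hv3 hvw.
have hq0 : u3 / w != 0 by rewrite mulf_neq0 ?invr_eq0.
have [Y1 [Y2 hY]] := L1 h2 hv1 hv2 hvq h1 h2' hq0.
exists 0, 0, (pz (q - h)), Y1, Y2, 0.
rewrite q3_z0 q3_00z hY. split => //.
rewrite ht hb.
have -> : pz q ^+ 2 = pz h ^+ 2 * pz (q - h) ^+ 2.
  by rewrite -!pz_sq -pzD; congr pz; lia.
field. by rewrite hu3 hw0.
Qed.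

Lemma CL a b c t : p != 2%N -> aniso3 a b c -> (exists m, v b = v a + m + m) ->
  t != 0 -> ratio3 a b c t.
Proof.
move=> h2 ha [m hm] ht0.
have [a0 b0 c0] := aniso3_neq0 ha.
set l := pz (- v a). set s2 := pz (- m).
have hl : l != 0 := pz_neq0 _. have hs2 : s2 != 0 := pz_neq0 _.
apply: (ratio3_scale (l := l) (s1 := 1) (s2 := s2) (s3 := 1)) => //.
apply: CL0 => //.
- rewrite expr1n mulr1 vM // v_pz. lia.
- rewrite vM ?expf_neq0 ?mulf_neq0 // vM // v_pz vsq // v_pz. lia.
- by rewrite expr1n mulr1 mulf_neq0.
- by rewrite !mulf_neq0 ?expf_neq0.
- apply: aniso3_scale => //; exact: oner_neq0.
Qed.

Lemma Dens3_odd a b c t : p != 2%N -> aniso3 a b c -> t != 0 -> ratio3 a b c t.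
Proof.
move=> h2 ha ht0.
have [qa [ea [hea hka]]] := int_parity (v a).
have [qb [eb [heb hkb]]] := int_parity (v b).
have [qc [ec [hec hkc]]] := int_parity (v c).
case/orP: hea => /eqP hea; case/orP: heb => /eqP heb; case/orP: hec => /eqP hec.
all: try (apply: CL => //; exists (qb - qa); lia).
all: try (apply: ratio3_swap; apply: CL => //; [exact: aniso3_swap | exists (qc - qa); lia]).
all: try (apply: ratio3_cyc; apply: CL => //; [exact: aniso3_cyc | exists (qc - qb); lia]).
Qed.


Lemma dec2P f n : ((dec2 f n).2 * 2 ^ (dec2 f n).1)%N = n.
Proof.
elim: f n => [|f IH] n /=; first by rewrite muln1.
case: ifP => h; first by rewrite muln1.
rewrite /= expnS mulnCA IH. move/negbT: h; rewrite negb_or => /andP [ho _].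
have := odd_double_half n. rewrite (negbTE ho) add0n => e. by rewrite -{2}e -muln2 mulnC.
Qed.

Lemma v_odd (n : nat) : p = 2%N -> odd n -> v n%:R = 0.
Proof.
move=> hp2 ho. rewrite v_nat; last by case: n ho.
rewrite logn_coprime // hp2 prime_coprime // dvdn2 ho. done.
Qed.

Lemma sqrel_sound (a b : nat) (neg : bool) : p = 2%N -> sqrel a b neg ->
  exists s, s != 0 /\ (if neg then - a%:R else a%:R : K) = b%:R * s ^+ 2.
Proof.
move=> hp2. rewrite /sqrel.
have ea := dec2P a a. have eb := dec2P b b.
move: ea eb. set ka := dec2 a a. set kb := dec2 b b.
case: ka => ka oa. case: kb => kb ob /= ea eb.
case/and4P => hoa hob hev hc.
have ob0 : (ob%:R : K) != 0 by apply: nat_neq0; case: ob hob {eb hc}.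
have vob : v ob%:R = 0 by apply: v_odd.
set t : K := (if neg then - oa%:R else oa%:R) / ob%:R.
have h8 : sm 3 ((if neg then - oa%:R else oa%:R) - ob%:R : K).
  case: neg hc t => hc t.
    have -> : - (oa%:R : K) - ob%:R = - (oa + ob)%N%:R by rewrite natrD; ring.
    apply: smN. apply: sm_nat. rewrite hp2 /dvdn. done.
  apply: sm_modn. rewrite hp2.
  have : (oa + 7 * ob)%N = (ob + 7 * ob)%N %[mod 8].
    rewrite (eqP hc). have -> : (ob + 7 * ob = ob * 8)%N by lia. by rewrite modnMl.
  by move/eqP; rewrite eqn_modDr => /eqP.
have ht : sm (2 * v 2%:R + 1) (t - 1).
  rewrite v2_two // mulr1.
  have -> : t - 1 = ((if neg then - oa%:R else oa%:R) - ob%:R) * (ob%:R : K)^-1.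
    rewrite /t. set A := (if neg then _ else _). field. done.
  have := smMv (ob%:R : K)^-1 h8. by rewrite vV // vob oppr0 addr0.
have [tau [htau0 htau]] := hensel_sq ht.
have hk : exists g : int, ka%:Z = kb%:Z + g + g.
  exists (((ka + kb)%N./2)%:Z - kb%:Z). have := odd_double_half (ka + kb)%N. rewrite (negbTE hev) add0n -addnn. lia.
case: hk => g hg.
exists (pz g * tau). split; first by rewrite mulf_neq0 ?pz_neq0.
have ea' : (a%:R : K) = oa%:R * pz ka by rewrite -ea natrM natrX pz_nat hp2.
have eb' : (b%:R : K) = ob%:R * pz kb by rewrite -eb natrM natrX pz_nat hp2.
have et : (if neg then - oa%:R else oa%:R : K) = ob%:R * tau ^+ 2.
  rewrite -htau /t. set A := (if neg then _ else _). field. done.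
rewrite eb'.
have -> : (if neg then - a%:R else a%:R : K) = (if neg then - oa%:R else oa%:R) * pz ka.
  by rewrite ea'; case: (neg); rewrite ?mulNr.
rewrite et hg !pzD. ring.
Qed.

Lemma cls2 (x : K) : p = 2%N -> x != 0 ->
  exists r, r \in S8 /\ exists s, s != 0 /\ x = r%:R * s ^+ 2.
Proof.
move=> hp2 hx.
have [u [hvu [hu0 hxu]]] := factor_v hx.
have [n [hn sn]] := approx_unit (M := 3) hvu hu0 isT.
have hon : odd n by rewrite hp2 dvdn2 negbK in hn.
set r0 := (n %% 8)%N.
have hor0 : odd r0 by rewrite /r0 odd_mod.
have hr0 : (r0 < 8)%N by rewrite /r0 ltn_pmod.
have s0 : sm 3 (u - r0%:R).
  have -> : u - r0%:R = (u - n%:R) + (n%:R - r0%:R) by ring.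
  apply: smD => //. apply: sm_modn. by rewrite hp2 /r0 modn_mod.
have r00 : (r0%:R : K) != 0 by apply: nat_neq0; case: (r0) hor0.
have vr0 : v r0%:R = 0 by apply: v_odd.
set t := u / r0%:R.
have ht : sm (2 * v 2%:R + 1) (t - 1).
  rewrite v2_two // mulr1.
  have -> : t - 1 = (u - r0%:R) * (r0%:R : K)^-1 by rewrite /t; field.
  have := smMv (r0%:R : K)^-1 s0. by rewrite vV // vr0 oppr0 addr0.
have [tau [htau0 htau]] := hensel_sq ht.
have [q [e [he hk]]] := int_parity (v x).
exists ((if e == 0 then 1 else 2) * r0)%N. split.
  case/orP: he => /eqP ->; rewrite /=; move: hor0 hr0; rewrite /r0;
  case: (n %% 8)%N => [|[|[|[|[|[|[|[|[|]]]]]]]]] //.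
exists (pz q * tau). split; first by rewrite mulf_neq0 ?pz_neq0.
have eu : u = r0%:R * tau ^+ 2 by rewrite -htau /t; field.
rewrite hxu hk pz_par eu.
case/orP: he => /eqP ->; rewrite /=.
  rewrite pz0 mul1n. ring.
rewrite pz1 hp2 natrM. ring.
Qed.


Lemma q3n_cast (r1 r2 r3 : nat) (x : nat * nat * nat) :
  ((q3n r1 r2 r3 x)%:R : K) = q3 r1%:R r2%:R r3%:R x.1.1%:R x.1.2%:R x.2%:R.
Proof. rewrite /q3n /q3 !natrD !natrM ?natrX. done. Qed.

Lemma ratio3_r r1 r2 r3 c : p = 2%N -> r1 \in S8 -> r2 \in S8 -> r3 \in S8 -> c \in S8 ->
  aniso3 r1%:R r2%:R r3%:R -> ratio3 r1%:R r2%:R r3%:R c%:R.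
Proof.
move=> hp2 h1 h2 h3 hc ha.
move/allP: check3_ok => /(_ r1 h1) /allP /(_ r2 h2) /allP /(_ r3 h3) /orP [iso|].
  exfalso. move/hasP: iso => [[[x1 x2] x3] _ /= /and3P [hx3 hA hs]].
  have [s [hs0 e]] := sqrel_sound hp2 hs.
  have := ha x1%:R x2%:R (x3%:R * s).
  have -> : (x3%:R * s != 0) by rewrite mulf_neq0 // nat_neq0 //; lia.
  rewrite !orbT => /(_ isT).
  have -> : q3 r1%:R r2%:R r3%:R x1%:R x2%:R (x3%:R * s) =
    (r1 * x1 ^ 2 + r2 * x2 ^ 2)%N%:R + (r3 * x3 ^ 2)%N%:R * s ^+ 2.
    rewrite /q3 !natrD !natrM ?natrX. ring.
  by rewrite /= in e; rewrite -e addrN eqxx.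
move/allP => /(_ c hc) /hasP [y _ /hasP [x _ /andP [/andP [hx hy] hs]]].
have [s [hs0 e]] := sqrel_sound hp2 hs.
exists x.1.1%:R, x.1.2%:R, x.2%:R, (s * y.1.1%:R), (s * y.1.2%:R), (s * y.2%:R).
have hy' : (0 < q3n r1 r2 r3 y)%N by move: hy; rewrite muln_gt0 => /andP [].
have ey : q3 r1%:R r2%:R r3%:R (s * y.1.1%:R) (s * y.1.2%:R) (s * y.2%:R) = s ^+ 2 * (q3n r1 r2 r3 y)%:R.
  rewrite q3n_cast /q3. ring.
have hq : ((q3n r1 r2 r3 y)%:R : K) != 0 by apply: nat_neq0; lia.
split; first by rewrite ey mulf_neq0 ?expf_neq0.
rewrite ey -q3n_cast e natrM. field. by rewrite hs0 hq.
Qed.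

Lemma Dens3_two a b c t : p = 2%N -> aniso3 a b c -> t != 0 -> ratio3 a b c t.
Proof.
move=> hp2 ha ht0.
have [a0 b0 c0] := aniso3_neq0 ha.
have [r1 [h1 [s1 [hs1 e1]]]] := cls2 hp2 a0.
have [r2 [h2 [s2 [hs2 e2]]]] := cls2 hp2 b0.
have [r3 [h3 [s3 [hs3 e3]]]] := cls2 hp2 c0.
have [rc [hc [sc [hsc ec]]]] := cls2 hp2 ht0.
have ha' : aniso3 r1%:R r2%:R r3%:R.
  have := aniso3_scale (oner_neq0 K) (invr_neq0 hs1) (invr_neq0 hs2) (invr_neq0 hs3) ha.
  have f : forall (r : nat) s, s != 0 -> 1 * (r%:R * s ^+ 2) * (s^-1) ^+ 2 = r%:R :> K.
    by move=> r s hs; field.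
  by rewrite e1 e2 e3 !f.
apply: (ratio3_scale (l := 1) (s1 := s1^-1) (s2 := s2^-1) (s3 := s3^-1)); first exact: oner_neq0.
have f : forall (r : nat) s, s != 0 -> 1 * (r%:R * s ^+ 2) * (s^-1) ^+ 2 = r%:R :> K.
  by move=> r s hs; field.
rewrite e1 e2 e3 !f // ec. apply: ratio3_sq => //. exact: ratio3_r.
Qed.

Lemma Dens3 a b c t : aniso3 a b c -> t != 0 -> ratio3 a b c t.
Proof.
case: (eqVneq p 2%N) => h2; first exact: Dens3_two.
exact: Dens3_odd.
Qed.


Definition gq3 (a b c d e f x y z : K) :=
  a * x * x + b * y * y + c * z * z + 2%:R * d * x * y + 2%:R * e * x * z + 2%:R * f * y * z.

Definition gratio3 a b c d e f t := exists x y z x' y' z',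
  gq3 a b c d e f x' y' z' != 0 /\ t = gq3 a b c d e f x y z / gq3 a b c d e f x' y' z'.

Lemma diag3 a b c d e f : (forall x y z, (x != 0) || (y != 0) || (z != 0) ->
  gq3 a b c d e f x y z != 0) -> forall t, t != 0 -> gratio3 a b c d e f t.
Proof.
move=> ha t ht0.
have a0 : a != 0.
  have := ha 1 0 0. rewrite oner_neq0 /gq3 => /(_ isT). apply: contra => /eqP ->. apply/eqP; ring.
set B := a * b - d ^+ 2.
have B0 : B != 0.
  have := ha (- d / a) 1 0. rewrite oner_neq0 orbT /= => /(_ isT).
  have -> : gq3 a b c d e f (- d / a) 1 0 = B / a by rewrite /gq3 /B; field.
  apply: contra => /eqP ->. by rewrite mul0r.
set F := a * f - d * e. set C := a * c - e ^+ 2. set G := B * C - F ^+ 2.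
pose iy Y Z := (Y - F * Z) / B.
pose ix X Y Z := (X - d * iy Y Z - e * Z) / a.
have key : forall X Y Z, q3 B 1 G X Y Z = a * B * gq3 a b c d e f (ix X Y Z) (iy Y Z) Z.
  move=> X Y Z. rewrite /q3 /gq3 /ix /iy /G /C /F /B. field. by rewrite a0 B0.
have hX : forall X Y Z, X = a * ix X Y Z + d * iy Y Z + e * Z by move=> *; rewrite /ix; field.
have hY : forall Y Z, Y = B * iy Y Z + F * Z by move=> *; rewrite /iy; field.
have an : aniso3 B 1 G.
  move=> X Y Z hn. rewrite key !mulf_neq0 //. apply: ha.
  apply: contraTT hn. rewrite !negb_or !negbK => /andP [/andP [/eqP h1 /eqP h2] /eqP h3].
  have eY : Y = 0 by rewrite (hY Y Z) h2 h3 !mulr0 addr0.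
  have eX : X = 0 by rewrite (hX X Y Z) h1 h2 h3 !mulr0 !addr0.
  by rewrite eX eY h3 eqxx.
have [X [Y [Z [X' [Y' [Z' [h0 ->]]]]]]] := Dens3 an ht0.
exists (ix X Y Z), (iy Y Z), Z, (ix X' Y' Z'), (iy Y' Z'), Z'.
rewrite !key in h0 *. split; first by move: h0; rewrite !mulf_eq0 negb_or => /andP [].
have h1 : gq3 a b c d e f (ix X' Y' Z') (iy Y' Z') Z' != 0 by move: h0; rewrite !mulf_eq0 !negb_or => /andP [].
field. by rewrite a0 B0 h1.
Qed.

Lemma sm_abs (k : K) : sm (- (absz (v k))%:Z) k.
Proof. case: (eqVneq k 0) => [->|hk]; [by left | right]. lia. Qed.

Lemma sm_term k M (c x y x' y' : K) : sm k c -> sm 0 x -> sm 0 y' ->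
  sm M (x - x') -> sm M (y - y') -> sm (k + M) (c * x * y - c * x' * y').
Proof.
move=> hc hx hy' h1 h2.
have -> : c * x * y - c * x' * y' = c * (x * (y - y') + (x - x') * y') by ring.
apply: smM => //. apply: smD.
  have := smM hx h2. by rewrite add0r.
have := smM h1 hy'. by rewrite addr0.
Qed.

Lemma sm_term0 k (c x y : K) : sm k c -> sm 0 x -> sm 0 y -> sm k (c * x * y).
Proof. move=> hc hx hy. have := smM (smM hc hx) hy. by rewrite !addr0. Qed.

Lemma gq3_bound a b c d e f (L : int) x y z :
  sm L a -> sm L b -> sm L c -> sm L (2%:R * d) -> sm L (2%:R * e) -> sm L (2%:R * f) ->
  sm 0 x -> sm 0 y -> sm 0 z -> sm L (gq3 a b c d e f x y z).
Proof.
move=> ha hb hc hd he hf hx hy hz. rewrite /gq3.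
by repeat apply: smD; apply: sm_term0.
Qed.

Lemma gq3_diff a b c d e f (L : int) M x y z x' y' z' :
  sm L a -> sm L b -> sm L c -> sm L (2%:R * d) -> sm L (2%:R * e) -> sm L (2%:R * f) ->
  sm 0 x -> sm 0 y -> sm 0 z -> sm 0 x' -> sm 0 y' -> sm 0 z' ->
  sm M (x - x') -> sm M (y - y') -> sm M (z - z') ->
  sm (L + M) (gq3 a b c d e f x y z - gq3 a b c d e f x' y' z').
Proof.
move=> ha hb hc hd he hf hx hy hz hx' hy' hz' h1 h2 h3.
have -> : gq3 a b c d e f x y z - gq3 a b c d e f x' y' z' =
  (a * x * x - a * x' * x') + (b * y * y - b * y' * y') + (c * z * z - c * z' * z')
  + (2%:R * d * x * y - 2%:R * d * x' * y') + (2%:R * e * x * z - 2%:R * e * x' * z')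
  + (2%:R * f * y * z - 2%:R * f * y' * z') by rewrite /gq3; ring.
repeat (apply: smD; last by apply: sm_term). by apply: sm_term.
Qed.


Lemma approx3_0 a b c d e f (x y z x' y' z' : K) (m : int) :
  sm 0 x -> sm 0 y -> sm 0 z -> sm 0 x' -> sm 0 y' -> sm 0 z' ->
  gq3 a b c d e f x' y' z' != 0 ->
  exists n1 n2 n3 n1' n2' n3' : nat, gq3 a b c d e f n1'%:R n2'%:R n3'%:R != 0 /\
    sm m (gq3 a b c d e f x y z / gq3 a b c d e f x' y' z'
          - gq3 a b c d e f n1%:R n2%:R n3%:R / gq3 a b c d e f n1'%:R n2'%:R n3'%:R).
Proof.
move=> hx hy hz hx' hy' hz' hB0.
set L : int := - (absz (v a) + absz (v b) + absz (v c) + absz (v (2%:R * d))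
   + absz (v (2%:R * e)) + absz (v (2%:R * f)))%N%:Z.
have sa : sm L a by apply: sm_le (sm_abs a); lia.
have sb : sm L b by apply: sm_le (sm_abs b); lia.
have sc : sm L c by apply: sm_le (sm_abs c); lia.
have sd : sm L (2%:R * d) by apply: sm_le (sm_abs _); lia.
have se : sm L (2%:R * e) by apply: sm_le (sm_abs _); lia.
have sf : sm L (2%:R * f) by apply: sm_le (sm_abs _); lia.
set A := gq3 a b c d e f x y z. set B := gq3 a b c d e f x' y' z'.
have sA : sm L A by apply: gq3_bound.
have sB : sm L B by apply: gq3_bound.
have hLB := sm_v_ge sB hB0.
set M : nat := (absz m + absz L + absz L + absz (v B) + absz (v B) + absz (v B) + 1)%N.
have [n1 s1] := nat_approx M hx. have [n2 s2] := nat_approx M hy.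
have [n3 s3] := nat_approx M hz. have [n1' s1'] := nat_approx M hx'.
have [n2' s2'] := nat_approx M hy'. have [n3' s3'] := nat_approx M hz'.
set A' := gq3 a b c d e f n1%:R n2%:R n3%:R. set B' := gq3 a b c d e f n1'%:R n2'%:R n3'%:R.
have dA : sm (L + M) (A - A') by apply: gq3_diff => //; apply: sm_nat_ge0.
have dB : sm (L + M) (B - B') by apply: gq3_diff => //; apply: sm_nat_ge0.
have hB'0 : B' != 0.
  apply/eqP => e0. rewrite e0 subr0 in dB. have := sm_v_ge dB hB0. lia.
have vB' : v B' = v B.
  have -> : B' = B + - (B - B') by ring.
  apply: v_strict => //. case: dB => [->|h]; [left; exact: oppr0 | right; rewrite vN; lia].
exists n1, n2, n3, n1', n2', n3'. split => //.
have -> : A / B - A' / B' = (A * (- (B - B')) + (A - A') * B) * (B * B')^-1.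
  field. by rewrite hB0 hB'0.
have hnum : sm (L + L + M%:Z) (A * (- (B - B')) + (A - A') * B).
  apply: smD.
    have := smM sA (smN dB). by rewrite addrA.
  have := smMv B dA. apply: sm_le. lia.
have := smMv (B * B')^-1 hnum. rewrite vV ?mulf_neq0 // vM // vB'. apply: sm_le. lia.
Qed.

Lemma sm0_scale (x : K) (N : nat) : (absz (v x) <= N)%N -> sm 0 (pz N * x).
Proof.
move=> h. case: (eqVneq x 0) => [->|hx]; first by rewrite mulr0; left.
right. rewrite vM ?pz_neq0 // v_pz. lia.
Qed.

Lemma gq3_scale a b c d e f l x y z :
  gq3 a b c d e f (l * x) (l * y) (l * z) = l ^+ 2 * gq3 a b c d e f x y z.
Proof. rewrite /gq3. ring. Qed.

Lemma approx3 a b c d e f (x y z x' y' z' : K) (m : int) :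
  gq3 a b c d e f x' y' z' != 0 ->
  exists n1 n2 n3 n1' n2' n3' : nat, gq3 a b c d e f n1'%:R n2'%:R n3'%:R != 0 /\
    sm m (gq3 a b c d e f x y z / gq3 a b c d e f x' y' z'
          - gq3 a b c d e f n1%:R n2%:R n3%:R / gq3 a b c d e f n1'%:R n2'%:R n3'%:R).
Proof.
move=> hB.
set N := (absz (v x) + absz (v y) + absz (v z) + absz (v x') + absz (v y') + absz (v z'))%N.
set l := pz N.
have hl : l != 0 := pz_neq0 _.
have hB' : gq3 a b c d e f (l * x') (l * y') (l * z') != 0.
  by rewrite gq3_scale mulf_neq0 // expf_neq0.
have hh := @approx3_0 a b c d e f (l * x) (l * y) (l * z) (l * x') (l * y') (l * z') m.
rewrite !gq3_scale in hh.
have e1 : l ^+ 2 * gq3 a b c d e f x y z / (l ^+ 2 * gq3 a b c d e f x' y' z')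
   = gq3 a b c d e f x y z / gq3 a b c d e f x' y' z'.
  field. by rewrite hl hB.
rewrite e1 in hh. apply: hh; try (apply: sm0_scale; rewrite /N; lia).
by rewrite -gq3_scale.
Qed.


Lemma qform_ext n (A : 'M[K]_n) x y : (forall i, x i = y i) -> qform A x = qform A y.
Proof. move=> h. rewrite /qform. apply: eq_bigr => i _. apply: eq_bigr => j _. by rewrite !h. Qed.

Lemma qform_scale n (A : 'M[K]_n) x s : qform A (fun i => s * x i) = s ^+ 2 * qform A x.
Proof.
rewrite /qform mulr_sumr. apply: eq_bigr => i _. rewrite mulr_sumr. apply: eq_bigr => j _.
rewrite expr2. ring.
Qed.

Lemma qform0 n (A : 'M[K]_n) : qform A (fun _ => 0) = 0.
Proof. rewrite /qform big1 // => i _. rewrite big1 // => j _. by rewrite !mulr0. Qed.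

Definition vec3 (T : zmodType) (n : nat) (x0 x1 x2 : T) : 'I_n -> T :=
  fun i => if val i == 0%N then x0 else if val i == 1%N then x1 else if val i == 2%N then x2 else 0.

Lemma sum3 n' (F : 'I_n'.+3 -> K) : \sum_(i < n'.+3) F i =
  F ord0 + F (lift ord0 ord0) + F (lift ord0 (lift ord0 ord0))
  + \sum_(i < n') F (lift ord0 (lift ord0 (lift ord0 i))).
Proof. by rewrite !big_ord_recl !addrA. Qed.

Lemma sum3z n' (F : 'I_n'.+3 -> K) : (forall i, F (lift ord0 (lift ord0 (lift ord0 i))) = 0) ->
  \sum_(i < n'.+3) F i = F ord0 + F (lift ord0 ord0) + F (lift ord0 (lift ord0 ord0)).
Proof. move=> h. by rewrite sum3 big1 ?addr0. Qed.

Lemma qform_vec3 n' (A : 'M[K]_n'.+3) (Asym : A^T = A) x y z :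
  qform A (vec3 x y z) = gq3 (A ord0 ord0) (A (lift ord0 ord0) (lift ord0 ord0))
    (A (lift ord0 (lift ord0 ord0)) (lift ord0 (lift ord0 ord0)))
    (A ord0 (lift ord0 ord0)) (A ord0 (lift ord0 (lift ord0 ord0)))
    (A (lift ord0 ord0) (lift ord0 (lift ord0 ord0))) x y z.
Proof.
have sym : forall i j, A j i = A i j by move=> i j; rewrite -{1}Asym mxE.
have z0 : forall i : 'I_n', vec3 x y z (lift ord0 (lift ord0 (lift ord0 i))) = 0 by move=> i; rewrite /vec3.
rewrite /qform sum3z; last by move=> i; apply: big1 => j _; rewrite z0 mulr0 mul0r.
rewrite !sum3z; try by move=> i; rewrite z0 mulr0.
rewrite /vec3 /= /gq3 (sym ord0) (sym ord0 (lift _ _)) (sym (lift _ _) (lift _ (lift _ _))). ring.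
Qed.


Lemma qform_vec3_nat n' (A : 'M[K]_n'.+3) (Asym : A^T = A) (n1 n2 n3 : nat) :
  qform A (fun i => ((vec3 (n1 : int) (n2 : int) (n3 : int) i)%:~R : K)) =
  gq3 (A ord0 ord0) (A (lift ord0 ord0) (lift ord0 ord0))
    (A (lift ord0 (lift ord0 ord0)) (lift ord0 (lift ord0 ord0)))
    (A ord0 (lift ord0 ord0)) (A ord0 (lift ord0 (lift ord0 ord0)))
    (A (lift ord0 ord0) (lift ord0 (lift ord0 ord0))) n1%:R n2%:R n3%:R.
Proof.
rewrite -qform_vec3 //. apply: qform_ext => i. rewrite /vec3.
case: ifP => _; first by rewrite -pmulrn.
case: ifP => _; first by rewrite -pmulrn.
case: ifP => _; first by rewrite -pmulrn.
by rewrite mulr0z.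
Qed.

Lemma dense3 n' (A : 'M[K]_n'.+3) (Asym : A^T = A) (Aaniso : anisotropic A) :
  pdense V (ratio_set (qvalues_Z A)).
Proof.
have H : forall x y z, (x != 0) || (y != 0) || (z != 0) ->
    gq3 (A ord0 ord0) (A (lift ord0 ord0) (lift ord0 ord0))
    (A (lift ord0 (lift ord0 ord0)) (lift ord0 (lift ord0 ord0)))
    (A ord0 (lift ord0 ord0)) (A ord0 (lift ord0 (lift ord0 ord0)))
    (A (lift ord0 ord0) (lift ord0 (lift ord0 ord0))) x y z != 0.
  move=> x y z hn. rewrite -qform_vec3 //. apply: Aaniso.
  case/orP: hn => [/orP [h|h]|h];
    [exists ord0 | exists (lift ord0 ord0) | exists (lift ord0 (lift ord0 ord0))]; by rewrite /vec3.
move=> y m.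
case: (eqVneq y 0) => [->|hy].
  exists 0. split; last by left.
  exists 0, (qform A (fun i => ((vec3 (1%N : int) (0%N : int) (0%N : int) i)%:~R : K))).
  split.
    exists (fun _ => 0). transitivity (qform A (fun _ => 0)); first by rewrite qform0.
    apply: qform_ext => i. by rewrite mulr0z.
  split; first by eexists.
  rewrite qform_vec3_nat //. split; last by rewrite mul0r.
  apply: H. by rewrite oner_neq0.
have [w1 [w2 [w3 [w1' [w2' [w3' [h0 ey]]]]]]] := diag3 H hy.
have [n1 [n2 [n3 [n1' [n2' [n3' [hn0 hsm]]]]]]] := approx3 w1 w2 w3 m h0.
eexists. split; last by apply/vcloseE; rewrite ey; exact: hsm.
eexists; eexists. split; [|split; [|split]].
- exists (vec3 (n1 : int) (n2 : int) (n3 : int)). by rewrite qform_vec3_nat.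
- exists (vec3 (n1' : int) (n2' : int) (n3' : int)). by rewrite qform_vec3_nat.
- exact: hn0.
- done.
Qed.


Lemma nondense n (A : 'M[K]_n) c0 : c0 != 0 ->
  (forall x y : 'I_n -> K, qform A y != 0 -> qform A x / qform A y != c0) ->
  ~ pdense V (ratio_set (qvalues_Z A)).
Proof.
move=> hc0 H hd.
have [c [[a [b [[xa ea] [[xb eb] [hb0 ec]]]]] hcl]] := hd c0 (v c0 + 2 * v 2%:R + 1).
set X := fun i => ((xa i)%:~R : K). set Y := fun i => ((xb i)%:~R : K).
have hY : qform A Y != 0 by rewrite -eb.
have hcX : c = qform A X / qform A Y by rewrite ec ea eb.
case: hcl => [e|hs'].
  by move: (H X Y hY); rewrite -hcX -e eqxx.
have hs : sm (v c0 + 2 * v 2%:R + 1) (c0 - c) by right.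
have c0' : c != 0.
  apply/eqP => e. rewrite e subr0 in hs. have := sm_v_ge hs hc0. have := v2_ge0. lia.
set t := c / c0.
have ht : sm (2 * v 2%:R + 1) (t - 1).
  have -> : t - 1 = - (c0 - c) * c0^-1 by rewrite /t; field.
  have := smMv c0^-1 (smN hs). rewrite vV //. apply: sm_le. lia.
have [s [hs0 est]] := hensel_sq ht.
have hsY : qform A (fun i => s * Y i) != 0 by rewrite qform_scale mulf_neq0 ?expf_neq0.
move: (H X (fun i => s * Y i) hsY). rewrite qform_scale.
have -> : qform A X / (s ^+ 2 * qform A Y) = c0.
  have e2 : qform A X / (s ^+ 2 * qform A Y) = (qform A X / qform A Y) / s ^+ 2.
    field. by rewrite hs0 hY.
  rewrite e2 -hcX -est /t. field. by rewrite c0' hc0.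
by rewrite eqxx.
Qed.

Lemma qform1 (A : 'M[K]_1) x : qform A x = A ord0 ord0 * x ord0 * x ord0.
Proof. by rewrite /qform !big_ord1. Qed.

Lemma nondense1 (A : 'M[K]_1) : ~ pdense V (ratio_set (qvalues_Z A)).
Proof.
apply: (nondense (c0 := p%:R)); first exact: p_neq0.
move=> x y. rewrite !qform1 => hy.
have a0 : A ord0 ord0 != 0 by apply: contraNneq hy => ->; rewrite !mul0r.
have y0 : y ord0 != 0 by apply: contraNneq hy => ->; rewrite !mulr0.
have -> : A ord0 ord0 * x ord0 * x ord0 / (A ord0 ord0 * y ord0 * y ord0) = (x ord0 / y ord0) ^+ 2.
  field. by rewrite a0 y0.
apply/eqP => e.
case: (eqVneq (x ord0 / y ord0) 0) => [e0|hn].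
  move: e. rewrite e0 expr0n /= => e1. by move: p_neq0; rewrite -e1 eqxx.
have := congr1 v e. rewrite vsq // v_p. lia.
Qed.


Lemma vsqM (u Y : K) : u != 0 -> Y != 0 -> v (u * Y ^+ 2) = v u + 2 * v Y.
Proof. move=> hu hY. by rewrite vM ?expf_neq0 // vsq. Qed.

Lemma nonnorm_odd0 u : p != 2%N -> v u = 0 -> u != 0 -> (forall s, - u != s ^+ 2) ->
  forall X Y, X ^+ 2 + u * Y ^+ 2 != p%:R.
Proof.
move=> h2 hvu hu hns X Y. apply/eqP => e.
have pn := p_neq0. have vp := v_p.
case: (eqVneq X 0) => [X0|hX].
  rewrite X0 expr0n /= add0r in e.
  have hY : Y != 0 by apply: contra_eq_neq e => ->; rewrite expr0n /= mulr0 eq_sym.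
  have := congr1 v e. rewrite vsqM // hvu vp. lia.
case: (eqVneq Y 0) => [Y0|hY].
  rewrite Y0 expr0n /= mulr0 addr0 in e. have := congr1 v e. rewrite vsq // vp. lia.
have hX2 : X ^+ 2 != 0 by rewrite expf_neq0.
have huY : u * Y ^+ 2 != 0 by rewrite mulf_neq0 ?expf_neq0.
case: (ltgtP (v X) (v Y)) => hc.
- have := congr1 v e. rewrite v_strict //; last by right; rewrite vsq // vsqM //; lia.
  rewrite vsq // vp. lia.
- have := congr1 v e. rewrite addrC v_strict //; last by right; rewrite vsq // vsqM //; lia.
  rewrite vsqM // vp. lia.
- have hle : v X <= 0.
    have := pval_add V hX2 huY. rewrite e pn => /(_ isT). rewrite vsq // vsqM // vp. lia.
  set t := - u * Y ^+ 2 / X ^+ 2.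
  have ht : sm (2 * v 2%:R + 1) (t - 1).
    rewrite v2_odd // mulr0 add0r.
    have -> : t - 1 = - (X ^+ 2 + u * Y ^+ 2) * (X ^+ 2)^-1 by rewrite /t; field; rewrite ?hX.
    rewrite e. right. rewrite vM ?oppr_eq0 ?invr_eq0 // vN vp vV // vsq //. lia.
  have [s [hs0 hst]] := hensel_sq ht.
  move/negP: (hns (s * X / Y)); apply; apply/eqP.
  have -> : - u = t * X ^+ 2 / Y ^+ 2 by rewrite /t; field; rewrite ?hX ?hY.
  rewrite hst. field. by rewrite hY.
Qed.

Lemma not_square_res (e : nat) : (forall z, e != z ^ 2 %[mod p]) -> v e%:R = 0 ->
  forall s : K, e%:R != s ^+ 2.
Proof.
move=> hres hve s. apply/eqP => es.
have e0n : (e != 0)%N by apply/eqP => ez; move: (hres 0%N); rewrite ez exp0n // mod0n eqxx.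
have e0 : (e%:R : K) != 0 by apply: nat_neq0.
have s0 : s != 0 by apply/eqP => s0; move: e0; rewrite es s0 expr0n /= eqxx.
have hvs : v s = 0 by move: (congr1 v es); rewrite hve vsq //; lia.
have [z hz] := nat_approx 1 (sm0_unit hvs).
have h1 : sm 1 (e%:R - (z ^ 2)%N%:R : K).
  rewrite es natrX.
  have -> : s ^+ 2 - z%:R ^+ 2 = (s - z%:R) * ((s - z%:R) + 2%:R * z%:R) by ring.
  have := smM hz (m := 1) (k := 0) (y := (s - z%:R) + 2%:R * z%:R). rewrite addr0. apply.
  apply: smD; first by apply: sm_le hz; lia.
  have := smM (sm_nat_ge0 2) (sm_nat_ge0 z). by rewrite addr0.
have := modn_sm h1. rewrite expn1 => /eqP. by rewrite (negbTE (hres z)).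
Qed.

Lemma nonnorm_odd1 u : p != 2%N -> v u = 0 -> u != 0 ->
  exists c0, c0 != 0 /\ forall X Y, X ^+ 2 + p%:R * u * Y ^+ 2 != c0.
Proof.
move=> h2 hvu hu.
have [e [hpe hres]] := nonres hp (odd_p h2).
have e0 : (0 < e)%N by case: (e) hpe; rewrite ?dvdn0.
have hve : v e%:R = 0 by rewrite v_nat // logn_coprime // prime_coprime.
have hnsq := not_square_res hres hve.
exists e%:R. split; first by apply: nat_neq0; lia.
move=> X Y. apply/eqP => eq.
have pn := p_neq0. have vp := v_p.
case: (eqVneq Y 0) => [Y0|hY].
  rewrite Y0 expr0n /= mulr0 addr0 in eq. by move: (hnsq X); rewrite eq eqxx.
have hpuY : p%:R * u * Y ^+ 2 != 0 by rewrite !mulf_neq0 ?expf_neq0.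
have vpuY : v (p%:R * u * Y ^+ 2) = 1 + 2 * v Y by rewrite vM ?mulf_neq0 ?expf_neq0 // vM // vp hvu vsq //; lia.
case: (eqVneq X 0) => [X0|hX].
  rewrite X0 expr0n /= add0r in eq. have := congr1 v eq. rewrite vpuY hve. lia.
have hX2 : X ^+ 2 != 0 by rewrite expf_neq0.
case: (ltP (2 * v X) (1 + 2 * v Y)) => hc.
  have := congr1 v eq. rewrite v_strict //; last by right; rewrite vsq // vpuY.
  rewrite vsq // hve => hvX.
  set t := e%:R / X ^+ 2.
  have ht : sm (2 * v 2%:R + 1) (t - 1).
    rewrite v2_odd // mulr0 add0r.
    have -> : t - 1 = p%:R * u * Y ^+ 2 * (X ^+ 2)^-1 by rewrite /t -eq; field; rewrite ?hX.
    right. rewrite vM ?invr_eq0 // vpuY vV // vsq //. lia.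
  have [s [hs0 hst]] := hensel_sq ht.
  move/negP: (hnsq (s * X)); apply; apply/eqP.
  have -> : (e%:R : K) = t * X ^+ 2 by rewrite /t; field; rewrite ?hX.
  rewrite hst. ring.
have := congr1 v eq. rewrite addrC v_strict //; last first.
  right. rewrite vsq // vpuY. have : 2 * v X != 1 + 2 * v Y by lia. move: hc. set aa := 2 * v X. set bb := 1 + 2 * v Y. lia.
rewrite vpuY hve. lia.
Qed.


Lemma mod32_sq (x y r : nat) : (((x %% 32) ^ 2 + r * (y %% 32) ^ 2) %% 32 = (x ^ 2 + r * y ^ 2) %% 32)%N.
Proof. by rewrite -modnDm -[in RHS]modnDm -modnMmr -[in RHS]modnMmr !modnXm. Qed.

Lemma mod32_pow (c j : nat) : ((c * 2 ^ (j + j)) %% 32 = (c * 4 ^ (minn j 3)) %% 32)%N.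
Proof.
have -> : (2 ^ (j + j) = 4 ^ j)%N by rewrite addnn -mul2n expnM.
case: (leqP j 3) => hj; first done.
have -> : j = ((j - 3) + 3)%N by lia.
rewrite expnD.
have -> : (c * (4 ^ (j - 3) * 4 ^ 3) = (c * 4 ^ (j - 3) * 2) * 32)%N by rewrite -!mulnA.
have -> : (c * 4 ^ 3 = (c * 2) * 32)%N by rewrite -!mulnA.
by rewrite !modnMl.
Qed.

Lemma nonnorm_two r : p = 2%N -> r \in S8 -> r != 7%N ->
  forall X Y : K, X ^+ 2 + r%:R * Y ^+ 2 != (c2of r)%:R.
Proof.
move=> hp2 hr hr7 X Y. apply/eqP => e.
set c := c2of r in e.
have c0n : (0 < c)%N by rewrite /c /c2of; case: ifP => _ //; case: ifP.
have c0 : (c%:R : K) != 0 by apply: nat_neq0; lia.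
have vc : v c%:R <= 1.
  rewrite v_nat // hp2. have : (logn 2 c <= 1)%N by rewrite /c /c2of; case: ifP => _ //; case: ifP.
  lia.
have [k [hkX [hkY hk]]] : exists k : int, (X = 0 \/ k <= v X) /\ (Y = 0 \/ k <= v Y) /\
    ((X != 0 /\ v X = k) \/ (Y != 0 /\ v Y = k)).
  case: (eqVneq X 0) => [X0|hX].
    case: (eqVneq Y 0) => [Y0|hY].
      by move: c0; rewrite -e X0 Y0 expr0n /= mulr0 addr0 eqxx.
    exists (v Y). split; [by left|split; [by right|by right]].
  case: (eqVneq Y 0) => [Y0|hY].
    exists (v X). split; [by right|split; [by left|by left]].
  exists (Num.min (v X) (v Y)). split; [right; lia|split; [right; lia|]].
  case: (leP (v X) (v Y)) => h; [left|right]; split => //; lia.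
set X' := X * pz (- k). set Y' := Y * pz (- k).
have sX' : sm 0 X'.
  case: hkX => [e0|h]; first by rewrite /X' e0 mul0r; left.
  case: (eqVneq X 0) => [e0|hX]; first by rewrite /X' e0 mul0r; left.
  right. rewrite /X' vM ?pz_neq0 // v_pz. lia.
have sY' : sm 0 Y'.
  case: hkY => [e0|h]; first by rewrite /Y' e0 mul0r; left.
  case: (eqVneq Y 0) => [e0|hY]; first by rewrite /Y' e0 mul0r; left.
  right. rewrite /Y' vM ?pz_neq0 // v_pz. lia.
have e' : X' ^+ 2 + r%:R * Y' ^+ 2 = c%:R * pz (- k) ^+ 2 by rewrite /X' /Y' -e; ring.
have sL : sm 0 (X' ^+ 2 + r%:R * Y' ^+ 2).
  apply: smD; first by rewrite expr2; have := smM sX' sX'; rewrite addr0.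
  have := smM (sm_nat_ge0 r) (smM sY' sY'). by rewrite !addr0 expr2.
have hk0 : k <= 0.
  case: (leP k 0) => // hkp. exfalso.
  have hR : c%:R * pz (- k) ^+ 2 != 0 by rewrite mulf_neq0 ?expf_neq0 ?pz_neq0.
  have := sm_v_ge sL. rewrite e' => /(_ hR). rewrite vM ?expf_neq0 ?pz_neq0 // vsq ?pz_neq0 // v_pz. lia.
set j := absz k.
have eR : c%:R * pz (- k) ^+ 2 = (c * 2 ^ (j + j))%N%:R :> K.
  rewrite -pz_sq. have -> : - k + - k = (j + j)%N%:Z by rewrite /j; lia.
  by rewrite pz_nat hp2 natrM natrX.
have [x sx] := nat_approx 5 sX'. have [y sy] := nat_approx 5 sY'.
have hmod : sm 5 ((x ^ 2 + r * y ^ 2)%N%:R - (c * 2 ^ (j + j))%N%:R : K).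
  rewrite -eR -e'.
  have -> : ((x ^ 2 + r * y ^ 2)%N%:R : K) = x%:R ^+ 2 + r%:R * y%:R ^+ 2 by rewrite natrD natrM !natrX.
  have -> : x%:R ^+ 2 + r%:R * y%:R ^+ 2 - (X' ^+ 2 + r%:R * Y' ^+ 2) =
     (- (X' - x%:R)) * (X' + x%:R) + r%:R * ((- (Y' - y%:R)) * (Y' + y%:R)) by ring.
  apply: smD.
    have := smM (smN sx) (smD sX' (sm_nat_ge0 x)). by rewrite addr0.
  have := smM (sm_nat_ge0 r) (smM (smN sy) (smD sY' (sm_nat_ge0 y))). by rewrite addr0 add0r.
have cong := modn_sm hmod. rewrite hp2 in cong.
have hodd : odd x || odd y.
  case: hk => [[hX hvX]|[hY hvY]].
    have hX' : X' != 0 by rewrite mulf_neq0 ?pz_neq0.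
    have vX' : v X' = 0 by rewrite /X' vM ?pz_neq0 // v_pz hvX; lia.
    case: (boolP (odd x)) => // hx. exfalso.
    have h1 : sm 1 (x%:R : K) by apply: sm_nat; rewrite hp2 expn1 dvdn2.
    apply: (unit_sm1 vX' hX'). have -> : X' = (X' - x%:R) + x%:R by ring.
    apply: smD => //. apply: sm_le sx. lia.
  have hY' : Y' != 0 by rewrite mulf_neq0 ?pz_neq0.
  have vY' : v Y' = 0 by rewrite /Y' vM ?pz_neq0 // v_pz hvY; lia.
  case: (boolP (odd y)) => hy; first by rewrite orbT. exfalso.
  have h1 : sm 1 (y%:R : K) by apply: sm_nat; rewrite hp2 expn1 dvdn2.
  apply: (unit_sm1 vY' hY'). have -> : Y' = (Y' - y%:R) + y%:R by ring.
  apply: smD => //. apply: sm_le sy. lia.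
move/allP: check2_ok => /(_ r hr) /implyP /(_ hr7).
rewrite /check2 => /allP /(_ (x %% 32)%N).
rewrite mem_iota ltn_pmod // => /(_ isT) /allP /(_ (y %% 32)%N).
rewrite mem_iota ltn_pmod // => /(_ isT) /implyP.
rewrite !odd_mod // => /(_ hodd) /allP /(_ (minn j 3)).
rewrite mem_iota /= => /(_ ltac:(apply: leq_ltn_trans (geq_minr _ _) _; done)).
rewrite mod32_sq -mod32_pow. move/negP; apply. rewrite -/c. exact/eqP.
Qed.


Lemma nonnorm (d : K) : d != 0 -> (forall s, - d != s ^+ 2) ->
  exists c0, c0 != 0 /\ forall X Y, X ^+ 2 + d * Y ^+ 2 != c0.
Proof.
move=> hd hns.
case: (eqVneq p 2%N) => hp2.
  have [r [hr [sg [hsg ed]]]] := cls2 hp2 hd.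
  have hr7 : r != 7%N.
    apply/eqP => r7. rewrite r7 in ed.
    have ht : sm (2 * v 2%:R + 1) (- 7%:R - 1 : K).
      rewrite v2_two // mulr1. have e8 : (8%N%:R : K) = 7%:R + 1 by rewrite natr1.
      have -> : (- 7%:R - 1 : K) = - (8%N%:R) by rewrite e8; ring.
      apply: smN. apply: sm_nat. by rewrite hp2.
    have [tau [_ htau]] := hensel_sq ht.
    move/negP: (hns (tau * sg)); apply; apply/eqP.
    by rewrite ed exprMn -htau mulNr.
  exists (c2of r)%:R. split.
    apply: nat_neq0. by rewrite /c2of; case: ifP => _ //; case: ifP.
  move=> X Y. have := nonnorm_two hp2 hr hr7 X (sg * Y).
  by rewrite ed exprMn mulrA.
have [u [hvu [hu0 edu]]] := factor_v hd.
have [q [e [he hk]]] := int_parity (v d).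
rewrite hk pz_par in edu.
case/orP: he => /eqP he; rewrite he ?pz0 ?pz1 in edu.
  exists p%:R. split; first exact: p_neq0.
  have hns' : forall s, - u != s ^+ 2.
    move=> s. apply/negP => /eqP es. move/negP: (hns (pz q * s)); apply; apply/eqP.
    by rewrite edu mulr1 exprMn -es; ring.
  move=> X Y. have := nonnorm_odd0 hp2 hvu hu0 hns' X (pz q * Y).
  by rewrite edu mulr1 exprMn; congr (_ != _); ring.
have [c0 [hc0 H]] := nonnorm_odd1 hp2 hvu hu0.
exists c0. split => // X Y. have := H X (pz q * Y).
by rewrite edu exprMn; congr (_ != _); ring.
Qed.

Definition gq2 (a b d x y : K) := a * x * x + b * y * y + 2%:R * d * x * y.

Lemma qform2 (A : 'M[K]_2) (Asym : A^T = A) x :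
  qform A x = gq2 (A ord0 ord0) (A (lift ord0 ord0) (lift ord0 ord0)) (A ord0 (lift ord0 ord0))
    (x ord0) (x (lift ord0 ord0)).
Proof.
have sym : forall i j, A j i = A i j by move=> i j; rewrite -{1}Asym mxE.
rewrite /qform !big_ord_recl !big_ord0 /gq2 (sym ord0 (lift _ _)).
idtac.
ring.
Qed.

Definition vec2 (x0 x1 : K) : 'I_2 -> K := fun i => if val i == 0%N then x0 else x1.

Lemma nondense2 (A : 'M[K]_2) (Asym : A^T = A) (Aaniso : anisotropic A) :
  ~ pdense V (ratio_set (qvalues_Z A)).
Proof.
set a := A ord0 ord0. set b := A (lift ord0 ord0) (lift ord0 ord0). set d := A ord0 (lift ord0 ord0).
have H : forall x0 x1, (x0 != 0) || (x1 != 0) -> gq2 a b d x0 x1 != 0.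
  move=> x0 x1 hn. have := Aaniso (vec2 x0 x1). rewrite qform2 //. apply.
  case/orP: hn => h; [exists ord0 | exists (lift ord0 ord0)]; by rewrite /vec2.
have a0 : a != 0.
  have := H 1 0. rewrite oner_neq0 /gq2 => /(_ isT). apply: contra => /eqP ->. apply/eqP; ring.
set dl := a * b - d ^+ 2.
have key : forall x0 x1, a * gq2 a b d x0 x1 = (a * x0 + d * x1) ^+ 2 + dl * x1 ^+ 2.
  by move=> x0 x1; rewrite /gq2 /dl; ring.
have hns : forall s, - dl != s ^+ 2.
  move=> s. apply/negP => /eqP es.
  have := H ((s - d) / a) 1. rewrite oner_neq0 orbT => /(_ isT).
  have : a * gq2 a b d ((s - d) / a) 1 = 0.
    rewrite key. have -> : a * ((s - d) / a) + d * 1 = s by field.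
    by rewrite expr1n mulr1 -es addNr.
  move/eqP. rewrite mulf_eq0 (negbTE a0) /= => /eqP ->. by rewrite eqxx.
have hdl : dl != 0.
  apply/eqP => e0. move/negP: (hns 0); apply; apply/eqP. by rewrite e0 oppr0 expr0n.
have [c0 [hc0 Hc]] := nonnorm hdl hns.
apply: (nondense hc0) => x y. rewrite !qform2 // -/a -/b -/d => hy.
set x0 := x ord0. set x1 := x (lift ord0 ord0). set y0 := y ord0. set y1 := y (lift ord0 ord0).
set u0 := a * x0 + d * x1. set u1 := x1. set w0 := a * y0 + d * y1. set w1 := y1.
have hN : w0 ^+ 2 + dl * w1 ^+ 2 != 0 by rewrite /w0 /w1 -key mulf_neq0.
have -> : gq2 a b d x0 x1 / gq2 a b d y0 y1 =
    ((u0 * w0 + dl * u1 * w1) / (w0 ^+ 2 + dl * w1 ^+ 2)) ^+ 2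
    + dl * ((u0 * w1 - u1 * w0) / (w0 ^+ 2 + dl * w1 ^+ 2)) ^+ 2.
  have e1 : gq2 a b d x0 x1 = (u0 ^+ 2 + dl * u1 ^+ 2) / a by rewrite /u0 /u1 -key; field.
  have e2 : gq2 a b d y0 y1 = (w0 ^+ 2 + dl * w1 ^+ 2) / a by rewrite /w0 /w1 -key; field.
  rewrite e1 e2. field. by rewrite a0 hN.
exact: Hc.
Qed.

End Padic.

Theorem lemma4 (p : nat) (hp : prime p) (K : fieldType) (V : padic_field p K)
  (n : nat) (A : 'M[K]_n) (Asym : A^T = A) (Anz : A != 0) (Adet : \det A != 0)
  (Aaniso : anisotropic A) :
  pdense V (ratio_set (qvalues_Z A)) <-> (3 <= n)%N.
Proof.
case: n A Asym Anz Adet Aaniso => [|[|[|n']]] A Asym Anz Adet Aaniso.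
- by move: Anz; rewrite thinmx0 eqxx.
- split => // h. exfalso. exact: (nondense1 hp h).
- split => // h. exfalso. exact: (nondense2 hp Asym Aaniso h).
- split => // _. exact: (@dense3 p hp K V n' A Asym Aaniso).
Qed.
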